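(* Let $G$ be a cactus on $n$ vertices with circumference $l$, $3\le l\le n-1$, and Wiener index $W$. Let $C_1,\dots,C_k$ be all the cycles of length $l$, $s_i=\sum_{v_j\in V(C_i)}D_j$, and let $a_i=l^{3}n+4ns_i-16l(s_i-W)$, $b_i=4l^{3}W-16s_i(s_i-W)$ if $l$ is even, and $a_i=l^{3}n+4ns_i-ln-16l(s_i-W)$, $b_i=4(l^{3}-l)W-16s_i(s_i-W)$ if $l$ is odd ($1\le i\le k$). Then (1) $\displaystyle q^{\mathcal{D}}(G)\ge \max_{1\le i\le k}\frac{a_i+\sqrt{a_i^{2}-16b_il(n-l)}}{8l(n-l)}$; (2) $\displaystyle q^{\mathcal{D}}_{min}(G)\le \min_{1\le i\le k}\frac{a_i-\sqrt{a_i^{2}-16b_il(n-l)}}{8l(n-l)}$.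
   Context: $G$ has vertex set $\{v_1,\dots,v_n\}$; $d_G$ is the graph distance; $\mathcal{D}(G)=(d_G(v_i,v_j))$. $D_j=\sum_{m\ne j}d_G(v_j,v_m)$, $Tr(G)=\mathrm{diag}(D_1,\dots,D_n)$, $\mathcal{Q}(G)=Tr(G)+\mathcal{D}(G)$. $W=\sum_{i<j}d_G(v_i,v_j)$. A cactus is a connected graph in which any two cycles share at most one vertex; the circumference is the length of a longest cycle. $q^{\mathcal{D}}(G)$, $q^{\mathcal{D}}_{min}(G)$ are the largest and least eigenvalues of $\mathcal{Q}(G)$. *)

(* Defs.v *)
From HB Require Import structures.
From mathcomp Require Import all_boot all_order all_algebra.
From mathcomp Require Import reals.
Set Implicit Arguments. Unset Strict Implicit. Unset Printing Implicit Defensive.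
Import Order.TTheory GRing.Theory Num.Theory.

Definition simple_graph (n : nat) (e : rel 'I_n) : Prop :=
  symmetric e /\ irreflexive e.

Definition connected_graph (n : nat) (e : rel 'I_n) : Prop :=
  forall u v, connect e u v.

Definition walk_of_len (n : nat) (e : rel 'I_n) (k : nat) (u v : 'I_n) : bool :=
  [exists p : k.-tuple 'I_n, path e u p && (last u p == v)].

(* graph distance d_G(u,v): least k with a walk of length k from u to v
   (for a connected graph on n vertices this is < n, hence found in iota 0 n) *)
Definition gdist (n : nat) (e : rel 'I_n) (u v : 'I_n) : nat :=
  find (fun k => walk_of_len e k u v) (iota 0 n).

Definition is_cycle (n : nat) (e : rel 'I_n) (c : seq 'I_n) : bool :=
  [&& 3 <= size c, uniq c & cycle e c].

(* the (oriented, both directions) edge set of a cycle: identifies the cycle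
   as a subgraph independently of starting point and orientation *)
Definition cycle_edges (n : nat) (c : seq 'I_n) : {set 'I_n * 'I_n} :=
  [set p | (p.1 \in c) && ((p.2 == next c p.1) || (p.2 == prev c p.1))].

Definition cactus (n : nat) (e : rel 'I_n) : Prop :=
  [/\ simple_graph e, connected_graph e &
    forall c1 c2, is_cycle e c1 -> is_cycle e c2 ->
      cycle_edges c1 != cycle_edges c2 ->
      #|[set x | (x \in c1) && (x \in c2)]| <= 1].

Definition circumference (n : nat) (e : rel 'I_n) (l : nat) : Prop :=
  (exists c, is_cycle e c /\ size c = l) /\
  (forall c, is_cycle e c -> size c <= l).

Definition transmission (n : nat) (e : rel 'I_n) (j : 'I_n) : nat :=
  \sum_(m < n | m != j) gdist e j m.

Definition wiener (n : nat) (e : rel 'I_n) : nat :=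
  \sum_(i < n) \sum_(j < n | i < j) gdist e i j.

Local Open Scope ring_scope.

Definition dist_mx (R : realType) (n : nat) (e : rel 'I_n) : 'M[R]_n :=
  \matrix_(i, j) (gdist e i j)%:R.

Definition trans_mx (R : realType) (n : nat) (e : rel 'I_n) : 'M[R]_n :=
  diag_mx (\row_j (transmission e j)%:R).

Definition distQ (R : realType) (n : nat) (e : rel 'I_n) : 'M[R]_n :=
  trans_mx R e + dist_mx R e.

Definition is_largest_eigenvalue (R : realType) (n : nat) (A : 'M[R]_n) (q : R) : Prop :=
  eigenvalue A q /\ forall a, eigenvalue A a -> a <= q.

Definition is_least_eigenvalue (R : realType) (n : nat) (A : 'M[R]_n) (q : R) : Prop :=
  eigenvalue A q /\ forall a, eigenvalue A a -> q <= a.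

Definition cyc_s (R : realType) (n : nat) (e : rel 'I_n) (c : seq 'I_n) : R :=
  \sum_(v <- c) (transmission e v)%:R.

Definition coef_a (R : realType) (n : nat) (e : rel 'I_n) (l : nat) (c : seq 'I_n) : R :=
  let s := cyc_s R e c in let W : R := (wiener e)%:R in
  let L : R := l%:R in let N : R := n%:R in
  if ~~ odd l then L ^+ 3 * N + 4 * N * s - 16 * L * (s - W)
  else L ^+ 3 * N + 4 * N * s - L * N - 16 * L * (s - W).

Definition coef_b (R : realType) (n : nat) (e : rel 'I_n) (l : nat) (c : seq 'I_n) : R :=
  let s := cyc_s R e c in let W : R := (wiener e)%:R in
  let L : R := l%:R in
  if ~~ odd l then 4 * L ^+ 3 * W - 16 * s * (s - W)
  else 4 * (L ^+ 3 - L) * W - 16 * s * (s - W).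

Definition bound_plus (R : realType) (n : nat) (e : rel 'I_n) (l : nat) (c : seq 'I_n) : R :=
  let a := coef_a R e l c in let b := coef_b R e l c in
  (a + Num.sqrt (a ^+ 2 - 16 * b * l%:R * (n - l)%:R)) / (8 * l%:R * (n - l)%:R).

Definition bound_minus (R : realType) (n : nat) (e : rel 'I_n) (l : nat) (c : seq 'I_n) : R :=
  let a := coef_a R e l c in let b := coef_b R e l c in
  (a - Num.sqrt (a ^+ 2 - 16 * b * l%:R * (n - l)%:R)) / (8 * l%:R * (n - l)%:R).

(* Main.v *)
Require Import Defs.
From HB Require Import structures.
From mathcomp Require Import all_boot all_order all_algebra.
From mathcomp Require Import reals.
From mathcomp Require Import zify.
From mathcomp.algebra_tactics Require Import ring lra.
Set Implicit Arguments. Unset Strict Implicit. Unset Printing Implicit Defensive.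
Import Order.TTheory GRing.Theory Num.Theory.
From mathcomp Require Import complex.
Section Walks.
Variables (n : nat) (e : rel 'I_n).

Lemma walkP k u v : reflect (exists p : seq 'I_n, [/\ size p = k, path e u p & last u p = v])
  (walk_of_len e k u v).
Proof.
apply: (iffP existsP).
  by case=> p /andP[pp /eqP lp]; exists (tval p); rewrite size_tuple.
case=> p [sp pp lp]; have sp' : size p == k by apply/eqP.
by exists (Tuple sp'); rewrite /= pp lp eqxx.
Qed.

Lemma walk0 u : walk_of_len e 0 u u.
Proof. by apply/walkP; exists [::]. Qed.

Lemma walk_cat k1 k2 u w v : walk_of_len e k1 u w -> walk_of_len e k2 w v ->
  walk_of_len e (k1 + k2) u v.
Proof.
move=> /walkP[p1 [s1 p1p l1]] /walkP[p2 [s2 p2p l2]]; apply/walkP.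
exists (p1 ++ p2); split; first by rewrite size_cat s1 s2.
  by rewrite cat_path p1p l1 p2p.
by rewrite last_cat l1.
Qed.

Lemma walk1 u v : e u v -> walk_of_len e 1 u v.
Proof. by move=> euv; apply/walkP; exists [:: v]; rewrite /= euv. Qed.

Lemma gdist_le k u v : walk_of_len e k u v -> (gdist e u v <= k)%N.
Proof.
move=> w; rewrite /gdist; case: (ltnP k n) => kn.
  rewrite leqNgt; apply/negP => /(before_find 0%N); rewrite nth_iota // add0n w.
  by [].
by apply: leq_trans (find_size _ _) _; rewrite size_iota.
Qed.

Lemma gdist_refl u : gdist e u u = 0%N.
Proof. by apply/eqP; rewrite -leqn0; apply: gdist_le; apply: walk0. Qed.

Hypothesis esym : symmetric e.

Lemma walk_sym k u v : walk_of_len e k u v -> walk_of_len e k v u.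
Proof.
move=> /walkP[p [sp pp lp]]; apply/walkP.
exists (rev (belast u p)); split.
- by rewrite size_rev size_belast.
- rewrite -lp rev_path; apply: sub_path pp => x y /=; by rewrite esym.
- case: p sp pp lp => [|y p] _ _ /= lp; first by rewrite lp.
  by rewrite rev_cons last_rcons.
Qed.

Lemma gdist_sym u v : gdist e u v = gdist e v u.
Proof.
rewrite /gdist; apply: eq_find => k.
by apply/idP/idP => /walk_sym.
Qed.

Hypothesis econn : connected_graph e.

Lemma gdist_walk u v : walk_of_len e (gdist e u v) u v.
Proof.
have [p pp ->] := connectP (econn u v).
case: (shortenP pp) => p' pp' up' _.
have hk : (size p' < n)%N.
  have := card_uniqP up'; rewrite /= => <-.
  by have := max_card (mem (u :: p')); rewrite card_ord.
have wk : walk_of_len e (size p') u (last u p') by apply/walkP; exists p'.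
have hs : has (fun k => walk_of_len e k u (last u p')) (iota 0 n).
  by apply/hasP; exists (size p'); rewrite ?mem_iota.
have := nth_find 0%N hs; rewrite nth_iota ?add0n //.
by move: hs; rewrite has_find size_iota.
Qed.

End Walks.
Definition cd (l a b : nat) := minn (a - b + (b - a)) (l - (a - b + (b - a))).

Lemma cd_tri l a b c : (a < l -> b < l -> c < l -> cd l a c <= cd l a b + cd l b c)%N.
Proof. rewrite /cd; lia. Qed.

Lemma cd_sym l a b : cd l a b = cd l b a.
Proof. rewrite /cd; lia. Qed.

Lemma cd_refl l a : cd l a a = 0%N.
Proof. rewrite /cd; lia. Qed.

Lemma mod2 l x : (x < l + l)%N -> x %% l = if (x < l)%N then x else (x - l)%N.
Proof.
move=> lt; case: (ltnP x l) => h; first by rewrite modn_small.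
rewrite -{1}(subnK h) modnDr modn_small //; lia.
Qed.

Definition rr (l a b : nat) := if (b < a)%N then (a - b)%N else (a + l - b)%N.



Lemma rr_ge l a b : (a < l)%N -> (b < l)%N -> (cd l a b <= rr l a b)%N.
Proof. rewrite /cd /rr; case: ifP; lia. Qed.
Lemma rr_lt l a b : (a < l)%N -> (b < l)%N -> a != b -> (rr l a b < l)%N.
Proof. rewrite /rr; case: ifP; lia. Qed.
Lemma rr_mod l a b : (a < l)%N -> (b < l)%N -> ((b + rr l a b) %% l = a)%N.
Proof.
rewrite /rr; case: ifP => h al bl.
  rewrite mod2; last lia. have -> : (b + (a - b) < l)%N by lia. lia.
rewrite mod2; last lia. have -> : (b + (a + l - b) < l)%N = false by lia. lia.
Qed.
Lemma mod_inj l b j j' : (b < l)%N -> (j.+1 < l)%N -> (j'.+1 < l)%N ->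
  ((b + j.+1) %% l = (b + j'.+1) %% l)%N -> j = j'.
Proof. move=> bl jl j'l; rewrite !mod2; [case: ifP; case: ifP; lia | lia | lia]. Qed.
Lemma mod_neq l b j : (b < l)%N -> (j.+1 < l)%N -> ((b + j.+1) %% l != b)%N.
Proof. move=> bl jl; rewrite mod2; [case: ifP; lia | lia]. Qed.
Definition gsum (l : nat) := \sum_(0 <= k < l) minn k (l - k).

Lemma gsumSS l : gsum l.+2 = gsum l + l.+1.
Proof.
rewrite /gsum big_nat_recl // min0n add0n.
rewrite (@eq_big_nat _ _ _ 0 l.+1 _ (fun k => minn k (l - k) + 1)); last first.
  move=> k /andP[_ kl]; lia.
rewrite big_nat_recr //= big_split /= sum_nat_const_nat subn0 muln1.
lia.
Qed.

Lemma gsum_formula l : 4 * gsum l + odd l = l * l.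
Proof.
elim/ltn_ind: l => l IH.
case: l IH => [|[|l]] IH; first by rewrite /gsum big_geq.
  by rewrite /gsum big_nat1.
rewrite gsumSS /=; have := IH l (ltac:(lia)); rewrite negbK; lia.
Qed.

Lemma rowsum l a : (a < l)%N -> \sum_(0 <= b < l) cd l a b = gsum l.
Proof.
move=> al; rewrite /gsum (@big_cat_nat _ _ _ a) //= ?(ltnW al) //.
rewrite (@big_cat_nat _ _ _ (l - a) 0 l) //= ?leq_subr // addnC; congr (_ + _).
  rewrite -{1}(add0n a) big_addn.
  apply: eq_big_nat => k /andP[_ kl]; rewrite /cd; lia.
rewrite -{1}(add0n (l - a)) big_addn.
have -> : (l - (l - a) = a)%N by lia.
apply: eq_big_nat => k /andP[_ kl]; rewrite /cd; lia.
Qed.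

Section Cyc.
Variables (n : nat) (e : rel 'I_n) (esym : symmetric e) (x0 : 'I_n) (c : seq 'I_n).
Hypotheses (uc : uniq c) (cc : cycle e c).
Local Notation l := (size c).
Local Notation cn i := (nth x0 c i).

Lemma next_idx j : (j < l)%N -> next c (cn j) = cn ((j + 1) %% l).
Proof.
move=> jl; rewrite next_nth mem_nth // index_uniq //.
case: c uc jl => [|y c'] //= _ jl.
case: (ltnP (j + 1) (size c').+1) => h.
  rewrite modn_small // addn1 /=; apply: set_nth_default; lia.
have -> : j = size c' by lia.
by rewrite nth_default // addn1 modnn.
Qed.

Definition fw a k := [seq cn ((a + j.+1) %% l) | j <- iota 0 k].

Lemma fw_path a k : (a < l)%N -> path e (cn a) (fw a k) /\ last (cn a) (fw a k) = cn ((a + k) %% l).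
Proof.
move=> al; elim: k => [|k [IHp IHl]]; first by rewrite addn0 modn_small.
rewrite /fw -addn1 iotaD map_cat -/(fw a k) cat_path last_cat IHp IHl /=.
have l0 : (0 < l)%N by lia.
have := next_cycle cc (mem_nth x0 (ltn_pmod (a + k) l0)).
rewrite next_idx ?ltn_pmod // modnDml add0n addnA addn1 => H; by rewrite addnS H.
Qed.

Lemma walk_fw a k : (a < l)%N -> walk_of_len e k (cn a) (cn ((a + k) %% l)).
Proof.
move=> al; apply/walkP; exists (fw a k); have [pp lp] := fw_path k al.
by rewrite size_map size_iota.
Qed.

Lemma gdist_le_cd a b : (a < l)%N -> (b < l)%N -> (gdist e (cn a) (cn b) <= cd l a b)%N.
Proof.
wlog ab : a b / (a <= b)%N.
  move=> H al bl; case: (leqP a b) => h; first exact: H.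
  by rewrite gdist_sym // cd_sym H // ltnW.
move=> al bl.
have w1 : walk_of_len e (b - a) (cn a) (cn b).
  by have := walk_fw (b - a) al; rewrite subnKC // modn_small.
have w2 : walk_of_len e (l - (b - a)) (cn a) (cn b).
  apply: walk_sym => //; have := walk_fw (l - (b - a)) bl.
  have -> : (b + (l - (b - a)) = a + l)%N by lia.
  by rewrite modnDr modn_small.
rewrite /cd; have -> : (a - b + (b - a) = b - a)%N by lia.
by rewrite leq_min !gdist_le.
Qed.

End Cyc.
Lemma shorten_ex (T : eqType) (r : rel T) x p : path r x p ->
  exists p', [/\ path r x p', uniq (x :: p'), {subset p' <= p} & last x p' = last x p].
Proof. by case/shortenP => p' *; exists p'. Qed.

Lemma last_in (T : eqType) (x : T) p : p != [::] -> last x p \in p.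
Proof. by case: p => // y p _ /=; exact: mem_last. Qed.

Lemma last_indep (T : eqType) (x y : T) (p : seq T) : p != [::] -> last x p = last y p.
Proof. by case: p. Qed.

Section Cyc2.
Variables (n : nat) (e : rel 'I_n) (esym : symmetric e) (x0 : 'I_n) (c : seq 'I_n).
Hypotheses (uc : uniq c) (cc : cycle e c).
Hypothesis cact : forall c2, is_cycle e c2 -> cycle_edges c != cycle_edges c2 ->
      (#|[set x | (x \in c) && (x \in c2)]| <= 1)%N.
Local Notation l := (size c).
Local Notation cn i := (nth x0 c i).

Lemma cd_next a : (a < l)%N -> (cd l a ((a + 1) %% l) <= 1)%N.
Proof. by move=> al; rewrite mod2; [rewrite /cd; case: ifP; lia | lia]. Qed.


Lemma key u w s0 : u \in c -> w \in c -> ~~ has (fun x => x \in c) s0 ->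
  path e u (rcons s0 w) -> (size s0 + 1 < cd l (index u c) (index w c))%N -> False.
Proof.
move=> uc' wc' hs0 pth lt.
set a := index u c in lt; set b := index w c in lt.
have al : (a < l)%N by rewrite index_mem.
have bl : (b < l)%N by rewrite index_mem.
have ua : u = cn a by rewrite nth_index.
have wb : w = cn b by rewrite nth_index.
have ab : a != b by apply/eqP => ab; move: lt; rewrite ab cd_refl.
have uw : u != w by apply: contra ab => /eqP uw; rewrite /a uw.
have [p' [pp' up' sub' lp']] := shorten_ex pth.
rewrite last_rcons in lp'.
have F1 x : x \in p' -> x \in c -> x = w.
  move=> /sub'; rewrite mem_rcons in_cons => /orP[/eqP //|xs] xc.
  by move/hasPn: hs0 => /(_ x xs); rewrite xc.
case: p' pp' up' sub' lp' F1 => [|q1 p''] pp' up' sub' lp' F1.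
  by move: uw; rewrite -lp' eqxx.
pose r := rr l a b.
have r2 : (1 < r)%N.
  by apply: leq_trans (rr_ge al bl); apply: leq_trans lt; rewrite ltnS addn1.
have rl : (r < l)%N by apply: rr_lt.
pose arc := fw x0 c b r.
have [parc larc] := @fw_path _ _ x0 c uc cc b r bl.
rewrite rr_mod // -/arc -ua in larc.
have sarc : size arc = r by rewrite size_map size_iota.
have arcn0 : arc != [::] by rewrite -size_eq0 sarc; case: (r) r2.
have arcP x : x \in arc -> exists2 j, (j < r)%N & x = cn ((b + j.+1) %% l).
  by move=> /mapP[j]; rewrite mem_iota add0n => jr ->; exists j.
have l0 : (0 < l)%N by case: (l) al.
have arcc x : x \in arc -> x \in c.
  by move=> /arcP[j _ ->]; apply: mem_nth; rewrite ltn_pmod.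
have uarc : uniq arc.
  rewrite map_inj_in_uniq ?iota_uniq // => j j'; rewrite !mem_iota !add0n => jr j'r.
  move/eqP; rewrite nth_uniq ?ltn_pmod // => /eqP; apply: mod_inj => //.
    exact: leq_ltn_trans jr rl.
  exact: leq_ltn_trans j'r rl.
have warc : w \notin arc.
  apply/negP => /arcP[j jr]; rewrite wb => /eqP; rewrite eq_sym nth_uniq ?ltn_pmod //.
  by apply/negP; apply: mod_neq => //; exact: leq_ltn_trans jr rl.
set c' := (q1 :: p'') ++ arc.
have uc2 : uniq c'.
  have up2 : uniq (q1 :: p'') by case/andP: up'.
  rewrite cat_uniq uarc andbT up2 /=.
  apply/hasPn => x xa; apply/negP => xp.
  by move: warc; rewrite -(F1 x xp (arcc x xa)) xa.
have uc2' : u \in c' by rewrite mem_cat -larc last_in ?orbT.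
have wc2 : w \in c' by rewrite mem_cat -lp' last_in.
have cyc2 : is_cycle e c'.
  apply/and3P; split => //.
    rewrite size_cat sarc /= addSn ltnS; apply: leq_trans r2 (leq_addl _ _).
  rewrite (cycle_path x0) last_cat (last_indep _ (cn b) arcn0) larc.
  by rewrite cat_path pp' lp' wb parc.
have ne : cycle_edges c != cycle_edges c'.
  apply/eqP => E.
  have : (u, q1) \in cycle_edges c'.
    rewrite inE; apply/andP; split; first exact: uc2'.
    apply/orP; left; change (q1 == next c' u).
    have -> : u = last q1 (p'' ++ arc) by rewrite last_cat (last_indep _ (cn b) arcn0) larc.
    by rewrite /c' cat_cons next_nth mem_last index_last -?cat_cons // nth_default.
  rewrite -E inE => /andP[_ /orP[] /eqP q1E].
  - change (q1 = next c u) in q1E.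
    have q1w : q1 = w by apply: F1; rewrite ?inE ?eqxx // q1E mem_next.
    have : b = ((a + 1) %% l)%N.
      by rewrite /b -q1w q1E ua (next_idx x0 uc cc al) index_uniq // ltn_pmod.
    move=> bE; move: lt; rewrite bE => lt'.
    by have := leq_trans lt' (cd_next al); rewrite addn1.
  - change (q1 = prev c u) in q1E.
    have q1w : q1 = w by apply: F1; rewrite ?inE ?eqxx // q1E mem_prev.
    have : a = ((b + 1) %% l)%N.
      have : next c w = u by rewrite -q1w q1E next_prev.
      by rewrite wb (next_idx x0 uc cc bl) => H; rewrite /a -H index_uniq // ltn_pmod.
    move=> aE; move: lt; rewrite cd_sym aE => lt'.
    by have := leq_trans lt' (cd_next bl); rewrite addn1.
have h2 := cact cyc2 ne.
have : [set u; w] \subset [set x | (x \in c) && (x \in c')].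
  by apply/subsetP => x; rewrite !inE => /orP[] /eqP ->; rewrite ?uc' ?wc' ?uc2' ?wc2.
move/subset_leq_card; rewrite cards2 uw => h1.
by have := leq_trans h1 h2.
Qed.

Lemma aux1 a b : (b < a.+1 + b)%N.
Proof. lia. Qed.

Lemma walk_cd k : forall u p, size p = k -> path e u p -> u \in c -> last u p \in c ->
  (cd l (index u c) (index (last u p) c) <= k)%N.
Proof.
elim/ltn_ind: k => k IH u p sp pp uc' lc.
have [p0|pn0] := eqVneq p [::]; first by rewrite p0 /= cd_refl.
have hh : has (fun x => x \in c) p by apply/hasP; exists (last u p); rewrite ?last_in.
case: (split_find hh) sp pp lc => w s1 s2 wc hs1 sp pp lc.
rewrite cat_path last_rcons in pp; case/andP: pp => pp1 pp2.
rewrite last_cat last_rcons in lc *.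
rewrite size_cat size_rcons in sp.
have h1 : (cd l (index u c) (index w c) <= size s1 + 1)%N.
  rewrite leqNgt; apply/negP => h; exact: (key uc' wc hs1 pp1 h).
have h2 := IH (size s2) (ltac:(rewrite -sp; exact: aux1)) w s2 erefl pp2 wc lc.
have := @cd_tri l (index u c) (index w c) (index (last w s2) c).
rewrite !index_mem uc' wc lc => /(_ isT isT isT) h3.
by apply: leq_trans h3 _; rewrite -sp -addn1 leq_add.
Qed.

Hypothesis econn : connected_graph e.

Lemma gdist_cd a b : (a < l)%N -> (b < l)%N -> gdist e (cn a) (cn b) = cd l a b.
Proof.
move=> al bl; apply/eqP; rewrite eqn_leq gdist_le_cd //=.
have /walkP [p [sp pp lp]] := gdist_walk econn (cn a) (cn b).
have := walk_cd sp pp (mem_nth x0 al); rewrite lp index_uniq // index_uniq //.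
by apply; apply: mem_nth.
Qed.

Lemma sum_nth (F : 'I_n -> nat) : \sum_(j <- c) F j = \sum_(b <- iota 0 l) F (cn b).
Proof. by rewrite -[c in LHS](mkseq_nth x0 c) /mkseq big_map. Qed.

Lemma sum_cycle : \sum_(i <- c) \sum_(j <- c) gdist e i j = (l * gsum l)%N.
Proof.
rewrite sum_nth.
rewrite (@eq_big_seq _ _ _ _ _ _ (fun a => gsum l)); last first.
  move=> a; rewrite mem_iota add0n => al.
  rewrite sum_nth -(rowsum al) /index_iota subn0; apply: eq_big_seq => b.
  by rewrite mem_iota add0n => bl; rewrite gdist_cd.
by rewrite big_const_seq count_predT size_iota iter_addn_0 mulnC.
Qed.

End Cyc2.

Section Half.
Variable n : nat.
Lemma sum_sym_half (F : 'I_n -> 'I_n -> nat) : (forall i j : 'I_n, F i j = F j i) ->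
  (forall i : 'I_n, F i i = 0%N) ->
  (\sum_(i : 'I_n) \sum_(j : 'I_n) F i j = 2 * \sum_(i : 'I_n) \sum_(j : 'I_n | (i < j)%N) F i j)%N.
Proof.
move=> Fs F0.
have E (i : 'I_n) : (\sum_(j : 'I_n) F i j = \sum_(j : 'I_n | (i < j)%N) F i j + \sum_(j : 'I_n | (j < i)%N) F i j)%N.
  rewrite !(big_mkcond (fun j => (_ < _)%N)) -big_split /=; apply: eq_bigr => j _.
  by case: ltngtP => [_|_|/val_inj ->]; rewrite ?addn0 ?F0.
rewrite (eq_bigr _ (fun i _ => E i)) big_split /= mul2n -addnn; congr (_ + _)%N.
rewrite (eq_bigr (fun i : 'I_n => \sum_(j : 'I_n) (if (j < i)%N then F i j else 0%N))); last first.
  by move=> i _; rewrite big_mkcond.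
rewrite exchange_big /=; apply: eq_bigr => i _; rewrite big_mkcond.
rewrite [RHS]big_mkcond; by apply: eq_bigr => j _; rewrite Fs.
Qed.
End Half.

Local Open Scope ring_scope.

Section Form.
Variables (R : realType) (n : nat) (e : rel 'I_n) (esym : symmetric e) (c : seq 'I_n).
Hypothesis uc : uniq c.

Lemma split_cR (F : 'I_n -> R) : \sum_i F i = \sum_(i <- c) F i + \sum_(i | i \notin c) F i.
Proof. by rewrite (bigID (fun i => i \in c)) /= big_uniq. Qed.

Lemma split_cN (F : 'I_n -> nat) : (\sum_i F i = \sum_(i <- c) F i + \sum_(i | i \notin c) F i)%N.
Proof. by rewrite (bigID (fun i => i \in c)) /= big_uniq. Qed.

Local Notation d i j := (gdist e i j).
Local Notation Din i := (\sum_(j <- c) d i j)%N.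
Local Notation Dout i := (\sum_(j | j \notin c) d i j)%N.

Lemma trans_split i : transmission e i = (Din i + Dout i)%N.
Proof.
rewrite /transmission -split_cN [RHS](bigD1 i) //= gdist_refl add0n.
by apply: eq_bigl => j; rewrite eq_sym.
Qed.

Lemma form_gen (x : 'rV[R]_n) : (x *m distQ R e *m x^T) 0 0 =
  \sum_i x 0 i ^+ 2 * (transmission e i)%:R + \sum_i x 0 i * \sum_j x 0 j * (d i j)%:R.
Proof.
rewrite /distQ mulmxDr mulmxDl mxE; congr (_ + _).
  rewrite /trans_mx mul_mx_diag mxE; apply: eq_bigr => i _; rewrite !mxE; ring.
rewrite mxE [RHS](eq_bigr (fun i => \sum_j x 0 i * x 0 j * (d i j)%:R)); last first.
  by move=> i _; rewrite mulr_sumr; apply: eq_bigr => j _; rewrite mulrA.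
rewrite [RHS]exchange_big; apply: eq_bigr => j _; rewrite mxE big_distrl.
by apply: eq_bigr => i _; rewrite !mxE /= mulrAC.
Qed.
End Form.

Section Form2.
Variables (R : realType) (n : nat) (e : rel 'I_n) (esym : symmetric e) (c : seq 'I_n).
Hypothesis uc : uniq c.
Local Notation d i j := (gdist e i j).
Local Notation dR i j := ((gdist e i j)%:R : R).

Definition xv (al be : R) : 'rV[R]_n := \row_i (if i \in c then al else be).

Lemma card_c : #|[pred i | i \in c]| = size c.
Proof. by rewrite -(card_uniqP uc). Qed.

Lemma card_nc : #|[pred i : 'I_n | i \notin c]| = (n - size c)%N.
Proof.
have h := cardC (mem c); rewrite card_ord (card_uniqP uc) in h.
apply: (@addnI (size c)); rewrite subnKC; last by apply: leq_trans (leq_addr _ _) (eq_leq h).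
by apply: etrans _ h; congr (_ + _)%N; apply: eq_card => i; rewrite !inE.
Qed.

Lemma norm_xv al be : (xv al be *m (xv al be)^T) 0 0 =
  al ^+ 2 * (size c)%:R + be ^+ 2 * (n - size c)%:R.
Proof.
rewrite mxE (bigID (fun i => i \in c)) /=.
rewrite (eq_bigr (fun _ => al ^+ 2)); last by move=> i ic; rewrite !mxE ic expr2.
rewrite [X in _ + X](eq_bigr (fun _ => be ^+ 2)); last by move=> i /negbTE ic; rewrite !mxE ic expr2.
rewrite !sumr_const -card_nc -card_c !mulr_natr.
by congr (_ *+ _ + _ *+ _); apply: eq_card.
Qed.

Lemma sum_seq_c (F : 'I_n -> R) (al : R) : \sum_(i <- c) (if i \in c then al else F i) = \sum_(i <- c) al.
Proof. by rewrite big_seq_cond [RHS]big_seq_cond; apply: eq_bigr => i /andP[-> _]. Qed.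

Lemma wiener2 : 2 * (wiener e)%:R = \sum_i (transmission e i)%:R :> R.
Proof.
rewrite -natr_sum -natrM; congr (_%:R).
rewrite /wiener -sum_sym_half; last by move=> i; exact: gdist_refl.
  apply: eq_bigr => i _; rewrite /transmission [LHS](bigD1 i) //= gdist_refl add0n.
  by apply: eq_bigl => j; rewrite eq_sym.
by move=> i j; exact: gdist_sym.
Qed.

Lemma form_xv al be :
  let s := cyc_s R e c in let W : R := (wiener e)%:R in
  let X : R := \sum_(i <- c) \sum_(j <- c) dR i j in
  (xv al be *m distQ R e *m (xv al be)^T) 0 0 =
  al ^+ 2 * (s + X) + 2 * al * be * (s - X) + be ^+ 2 * (4 * W - 3 * s + X).
Proof.
move=> s W X.
rewrite form_gen //.
pose Y := \sum_(i <- c) \sum_(j | j \notin c) dR i j.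
pose Y' := \sum_(i | i \notin c) \sum_(j <- c) dR i j.
pose Z := \sum_(i | i \notin c) \sum_(j | j \notin c) dR i j.
have Tr i : (transmission e i)%:R = \sum_(j <- c) dR i j + \sum_(j | j \notin c) dR i j :> R.
  by rewrite (trans_split e uc) natrD !natr_sum.
have hs : s = X + Y by rewrite /s /cyc_s (eq_bigr _ (fun i _ => Tr i)) big_split.
have hY : Y' = Y.
  rewrite /Y' /Y exchange_big /=; apply: eq_bigr => i _; apply: eq_bigr => j _.
  by rewrite gdist_sym.
have hW : 2 * W = X + Y + Y' + Z.
  rewrite /W wiener2 (split_cR uc) (eq_bigr _ (fun i _ => Tr i)).
  rewrite [X in _ + X](eq_bigr _ (fun i _ => Tr i)) !big_split /=.
  by rewrite /X /Y /Y' /Z addrA.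
have inner i : \sum_j (xv al be) 0 j * dR i j =
    al * \sum_(j <- c) dR i j + be * \sum_(j | j \notin c) dR i j.
  rewrite (split_cR uc) !mulr_sumr; congr (_ + _).
    by rewrite big_seq [RHS]big_seq; apply: eq_bigr => j jc; rewrite mxE jc.
  by apply: eq_bigr => j /negbTE jc; rewrite mxE jc.
rewrite (eq_bigr _ (fun i _ => congr1 (fun t => xv al be 0 i * t) (inner i))).
rewrite 2!(split_cR uc).
have hD : \sum_(i | i \notin c) (transmission e i)%:R = 2 * W - s :> R.
  by rewrite /W wiener2 (split_cR uc) /s /cyc_s addrC addKr.
have S1 : \sum_(i <- c) xv al be 0 i ^+ 2 * (transmission e i)%:R = al ^+ 2 * s.
  by rewrite /s /cyc_s mulr_sumr big_seq [RHS]big_seq; apply: eq_bigr => i ic; rewrite mxE ic.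
have S2 : \sum_(i | i \notin c) xv al be 0 i ^+ 2 * (transmission e i)%:R = be ^+ 2 * (2 * W - s).
  by rewrite -hD mulr_sumr; apply: eq_bigr => i /negbTE ic; rewrite mxE ic.
have S3 : \sum_(i <- c) xv al be 0 i * (al * \sum_(j <- c) dR i j + be * \sum_(j | j \notin c) dR i j)
    = al ^+ 2 * X + al * be * Y.
  rewrite big_seq (eq_bigr (fun i => al ^+ 2 * \sum_(j <- c) dR i j + al * be * \sum_(j | j \notin c) dR i j)).
    by rewrite -big_seq big_split /= -!mulr_sumr.
  by move=> i ic; rewrite mxE ic; ring.
have S4 : \sum_(i | i \notin c) xv al be 0 i * (al * \sum_(j <- c) dR i j + be * \sum_(j | j \notin c) dR i j)
    = al * be * Y' + be ^+ 2 * Z.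
  rewrite (eq_bigr (fun i => al * be * \sum_(j <- c) dR i j + be ^+ 2 * \sum_(j | j \notin c) dR i j)).
    by rewrite big_split /= -!mulr_sumr.
  by move=> i /negbTE ic; rewrite mxE ic; ring.
rewrite S1 S2 S3 S4.
have hZ : Z = 2 * W - X - 2 * Y by rewrite hW hY; ring.
rewrite hZ hY hs; ring.
Qed.

End Form2.

Section Ray.
Variable R : realType.
Local Notation C := (R[i]).
Local Notation f := (real_complex R).
Local Open Scope complex_scope.
Local Notation Re := (@complex.Re R).
Local Notation Im := (@complex.Im R).

Lemma herm_map n (M : 'M[R]_n) : M^T = M -> map_mx f M \is hermsymmx.
Proof.
move=> sM; apply/is_hermitianmxP; rewrite expr0 scale1r; apply/matrixP => i j.
rewrite !mxE.
have -> : M j i = M i j by rewrite -{1}sM mxE.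
exact: (esym (conjc_real _)).
Qed.

Lemma tc_map m n (A : 'M[R]_(m, n)) : ((map_mx f A)^t*)%sesqui = map_mx f A^T.
Proof. by apply/matrixP => i j; rewrite !mxE; exact: conjc_real. Qed.

Lemma tc_mul m n p (A : 'M[C]_(m, n)) (B : 'M[C]_(n, p)) :
  ((A *m B)^t* = B^t* *m A^t*)%sesqui.
Proof. by rewrite trmx_mul map_mxM. Qed.

Lemma zzJ (z : C) : z * (z^*)%C = ((Re z) ^+ 2 + (Im z) ^+ 2)%:C.
Proof. by rewrite add_Re2_Im2 sqr_normc. Qed.

Lemma decomp n (M : 'M[R]_n) : M^T = M -> forall x : 'rV[R]_n,
  exists d w : 'rV[R]_n, [/\ forall i, eigenvalue M (d 0 i), forall i, 0 <= w 0 i,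
   (x *m M *m x^T) 0 0 = \sum_i d 0 i * w 0 i & (x *m x^T) 0 0 = \sum_i w 0 i].
Proof.
move=> sM x.
set Mc := map_mx f M.
have hM := herm_map sM.
have /orthomx_spectralP eqM := hermitian_normalmx hM.
have Pu := spectral_unitarymx Mc.
set P := spectralmx Mc in eqM Pu; set D := spectral_diag Mc in eqM.
have PPt : (P *m P^t* = 1%:M)%sesqui by apply/unitarymxP.
have PtP := mulmx1C PPt.
rewrite invmx_unitary // in eqM.
have Dreal := hermitian_spectral_diag_real hM.
set xc := map_mx f x.
set y := (xc *m P^t*)%sesqui.
exists (\row_i Re (D 0 i)), (\row_i ((Re (y 0 i)) ^+ 2 + (Im (y 0 i)) ^+ 2)).
have DR i : (Re (D 0 i))%:C = D 0 i.
  by apply: RRe_real; apply: (mxOverP Dreal).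
split.
- move=> i; rewrite mxE eigenvalue_root_char -(fmorph_root f) map_char_poly.
  rewrite (_ : root _ _ = root (char_poly Mc) (D 0 i)); last by congr root; exact: DR.
  rewrite -eigenvalue_root_char; apply/eigenvalueP; exists (row i P).
    rewrite -(row_mul i P Mc) /Mc {1}eqM !mulmxA PPt mul1mx row_mul row_diag_mx -scalemxAl.
    by rewrite -rowE.
  apply/eqP => r0.
  have : row i (P *m P^t*)%sesqui = 0 by rewrite row_mul r0 mul0mx.
  rewrite PPt => /rowP /(_ i); rewrite !mxE eqxx /=; by move/eqP; rewrite oner_eq0.
- by move=> i; rewrite mxE addr_ge0 // sqr_ge0.
- apply: complexI; rewrite rmorph_sum /=.
  have -> : f ((x *m M *m x^T) 0 0) = (xc *m Mc *m (xc^t*)%sesqui) 0 0.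
    by rewrite tc_map -!map_mxM [RHS]mxE.
  rewrite /Mc {1}eqM !mulmxA -(mulmxA xc) -/y.
  rewrite !mulmxA -/y -(mulmxA _ P).
  have Ey : (P *m (xc^t*) = y^t*)%sesqui by rewrite tc_mul trmxCK.
  rewrite Ey.
  clearbody y; rewrite mxE mul_mx_diag; apply: eq_bigr => i _; rewrite !mxE rmorphM /= -zzJ. rewrite [X in X * _ = _]mulrC -mulrA; congr (_ * _); exact: esym (DR i).
- apply: complexI; rewrite rmorph_sum /=.
  have -> : f ((x *m x^T) 0 0) = (xc *m (xc^t*)%sesqui) 0 0.
    by rewrite tc_map -!map_mxM [RHS]mxE.
  rewrite -[xc in xc *m _]mulmx1 -PtP !mulmxA -/y -mulmxA.
  have -> : (P *m (xc^t*) = y^t*)%sesqui by rewrite tc_mul trmxCK.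
  rewrite mxE; apply: eq_bigr => i _.
  by rewrite !mxE -zzJ.
Qed.
End Ray.

Lemma psd2 (R : realFieldType) (P Q B : R) :
  (forall x y : R, 0 <= P * x ^+ 2 - 2 * B * x * y + Q * y ^+ 2) ->
  [/\ 0 <= P, 0 <= Q & B ^+ 2 <= P * Q].
Proof.
move=> H.
have h10 := H 1 0; have h01 := H 0 1.
have hP : 0 <= P by move: h10; rewrite !expr2; lra.
have hQ : 0 <= Q by move: h01; rewrite !expr2; lra.
split => //.
have [Pp|P0] := boolP (0 < P).
  have := H B P; rewrite !expr2 => h.
  have : 0 <= P * (P * Q - B * B) by move: h; lra.
  by rewrite pmulr_rge0 // subr_ge0.
have P0' : P = 0 by move: P0 hP; lra.
have [Qp|Q0] := boolP (0 < Q).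
  have := H Q B; rewrite !expr2 P0' => h.
  have : 0 <= Q * (- (B * B)) by move: h; lra.
  rewrite pmulr_rge0 // oppr_ge0 => h2.
  by rewrite mul0r.
have Q0' : Q = 0 by move: Q0 hQ; lra.
have := H B 1; rewrite !expr2 P0' Q0' => h.
rewrite mul0r; nra.
Qed.

Lemma bound_up (R : realType) (L N A B Cc q : R) : 0 < L -> 0 < N ->
  0 <= L * q - A -> 0 <= N * q - Cc -> B ^+ 2 <= (L * q - A) * (N * q - Cc) ->
  forall a b, a = 4 * (A * N + Cc * L) -> b = 4 * (A * Cc - B ^+ 2) ->
  (a + Num.sqrt (a ^+ 2 - 16 * b * L * N)) / (8 * L * N) <= q.
Proof.
move=> L0 N0 hP hQ hB a b ha hb.
have LN : 0 < 8 * L * N by rewrite !mulr_gt0.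
rewrite ler_pdivrMr //.
set T := 4 * (N * (L * q - A) + L * (N * q - Cc)).
have T0 : 0 <= T by rewrite mulr_ge0 // addr_ge0 // mulr_ge0 // ltW.
have D : a ^+ 2 - 16 * b * L * N <= T ^+ 2.
  have : T ^+ 2 - (a ^+ 2 - 16 * b * L * N) = 64 * (L * N) * ((L * q - A) * (N * q - Cc) - B ^+ 2).
    by rewrite /T ha ?hb; ring.
  move=> E; rewrite -subr_ge0 E; apply: mulr_ge0; last by rewrite subr_ge0.
  by apply: mulr_ge0 => //; apply: mulr_ge0; apply: ltW.
have := ler_wsqrtr D; rewrite sqrtr_sqr ger0_norm // => hs.
have -> : q * (8 * L * N) = a + T by rewrite /T ha ?hb; ring.
by rewrite lerD2l.
Qed.

Lemma bound_down (R : realType) (L N A B Cc q : R) : 0 < L -> 0 < N ->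
  0 <= A - L * q -> 0 <= Cc - N * q -> B ^+ 2 <= (A - L * q) * (Cc - N * q) ->
  forall a b, a = 4 * (A * N + Cc * L) -> b = 4 * (A * Cc - B ^+ 2) ->
  q <= (a - Num.sqrt (a ^+ 2 - 16 * b * L * N)) / (8 * L * N).
Proof.
move=> L0 N0 hP hQ hB a b ha hb.
have LN : 0 < 8 * L * N by rewrite !mulr_gt0.
rewrite ler_pdivlMr //.
set T := 4 * (N * (A - L * q) + L * (Cc - N * q)).
have T0 : 0 <= T by rewrite mulr_ge0 // addr_ge0 // mulr_ge0 // ltW.
have D : a ^+ 2 - 16 * b * L * N <= T ^+ 2.
  have : T ^+ 2 - (a ^+ 2 - 16 * b * L * N) = 64 * (L * N) * ((A - L * q) * (Cc - N * q) - B ^+ 2).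
    by rewrite /T ha ?hb; ring.
  move=> E; rewrite -subr_ge0 E; apply: mulr_ge0; last by rewrite subr_ge0.
  by apply: mulr_ge0 => //; apply: mulr_ge0; apply: ltW.
have := ler_wsqrtr D; rewrite sqrtr_sqr ger0_norm // => hs.
have -> : q * (8 * L * N) = a - T by rewrite /T ha ?hb; ring.
by rewrite lerD2l lerN2.
Qed.

Lemma rayleigh_max (R : realType) n (M : 'M[R]_n) q : M^T = M ->
  is_largest_eigenvalue M q -> forall x : 'rV[R]_n, (x *m M *m x^T) 0 0 <= q * (x *m x^T) 0 0.
Proof.
move=> sM [_ qmax] x; have [d [w [de w0 E1 E2]]] := decomp sM x.
rewrite E1 E2 mulr_sumr; apply: ler_sum => i _; by rewrite ler_wpM2r // qmax.
Qed.

Lemma rayleigh_min (R : realType) n (M : 'M[R]_n) q : M^T = M ->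
  is_least_eigenvalue M q -> forall x : 'rV[R]_n, q * (x *m x^T) 0 0 <= (x *m M *m x^T) 0 0.
Proof.
move=> sM [_ qmin] x; have [d [w [de w0 E1 E2]]] := decomp sM x.
rewrite E1 E2 mulr_sumr; apply: ler_sum => i _; by rewrite ler_wpM2r // qmin.
Qed.

Lemma distQ_sym (R : realType) n (e : rel 'I_n) : symmetric e -> (distQ R e)^T = distQ R e.
Proof.
move=> esym; apply/matrixP => i j; rewrite !mxE (gdist_sym esym).
by case: (eqVneq i j) => [->|ij]; rewrite ?eqxx // eq_sym (negbTE ij).
Qed.

Theorem corollary4p11 (R : realType) (n : nat) (e : rel 'I_n) (l : nat) :
  cactus e -> circumference e l -> (3 <= l)%N -> (l <= n.-1)%N ->
  (forall q : R, is_largest_eigenvalue (distQ R e) q ->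
     forall c, is_cycle e c -> size c = l -> bound_plus R e l c <= q) /\
  (forall q : R, is_least_eigenvalue (distQ R e) q ->
     forall c, is_cycle e c -> size c = l -> q <= bound_minus R e l c).
Proof.
move=> [[esym irr] econn cact] _ l3 ln.
have ln' : (l < n)%N by move: l3 ln; clear; lia.
have n0 : (0 < n)%N by move: ln'; clear; lia.
pose x0 := Ordinal n0.
have sQ := distQ_sym R esym.
have L0 : 0 < l%:R :> R by rewrite ltr0n; move: l3; clear; lia.
have N0 : 0 < (n - l)%:R :> R by rewrite ltr0n subn_gt0.
have key2 c : is_cycle e c -> size c = l ->
   let s := cyc_s R e c in let W : R := (wiener e)%:R in
   let X := \sum_(i <- c) \sum_(j <- c) ((gdist e i j)%:R : R) in
   [/\ coef_a R e l c = 4 * ((s + X) * (n - l)%:R + (4 * W - 3 * s + X) * l%:R),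
       coef_b R e l c = 4 * ((s + X) * (4 * W - 3 * s + X) - (s - X) ^+ 2),
       forall al be : R, (xv c al be *m distQ R e *m (xv c al be)^T) 0 0 =
         al ^+ 2 * (s + X) + 2 * al * be * (s - X) + be ^+ 2 * (4 * W - 3 * s + X) &
       forall al be : R, (xv c al be *m (xv c al be)^T) 0 0 =
         al ^+ 2 * l%:R + be ^+ 2 * (n - l)%:R].
  move=> cyc sc s W X; have /and3P[c3 uc cc] := cyc.
  have hX : l%:R ^+ 3 = 4 * X + (odd l)%:R * l%:R.
    have h1 := sum_cycle esym x0 uc cc (fun c2 => cact c c2 cyc) econn.
    have -> : X = ((size c * gsum (size c))%N)%:R.
      by rewrite /X -h1 natr_sum; apply: eq_bigr => i _; rewrite natr_sum.
    rewrite sc; have h2 := gsum_formula l.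
    have h3 : (l * (4 * gsum l + odd l) = l * (l * l))%N by rewrite h2.
    move: h3 => /(congr1 (fun k => k%:R : R)); rewrite !natrM natrD !natrM => h3.
    transitivity ((l%:R : R) * (l%:R * l%:R)); first ring.
    rewrite -h3; ring.
  split.
  - rewrite /coef_a -/s -/W -/X (natrB _ (ltnW ln')).
    by case: (odd l) hX => /= ->; ring.
  - rewrite /coef_b -/s -/W -/X.
    by case: (odd l) hX => /= ->; ring.
  - by move=> al be; rewrite form_xv.
  - by move=> al be; rewrite norm_xv // sc.
split.
- move=> q hq c cyc sc; have [ha hb hf hn] := key2 c cyc sc.
  set s := cyc_s R e c in ha hb hf; set W : R := (wiener e)%:R in ha hb hf.
  set X := \sum_(i <- c) \sum_(j <- c) ((gdist e i j)%:R : R) in ha hb hf.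
  have H al be : 0 <= (l%:R * q - (s + X)) * al ^+ 2 - 2 * (s - X) * al * be
      + ((n - l)%:R * q - (4 * W - 3 * s + X)) * be ^+ 2.
    have := rayleigh_max sQ hq (xv c al be); rewrite hf hn -subr_ge0.
    by congr (0 <= _); ring.
  have [h1 h2 h3] := psd2 H.
  exact: (bound_up L0 N0 h1 h2 h3 ha hb).
- move=> q hq c cyc sc; have [ha hb hf hn] := key2 c cyc sc.
  set s := cyc_s R e c in ha hb hf; set W : R := (wiener e)%:R in ha hb hf.
  set X := \sum_(i <- c) \sum_(j <- c) ((gdist e i j)%:R : R) in ha hb hf.
  have H al be : 0 <= ((s + X) - l%:R * q) * al ^+ 2 - 2 * (- (s - X)) * al * be
      + ((4 * W - 3 * s + X) - (n - l)%:R * q) * be ^+ 2.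
    have := rayleigh_min sQ hq (xv c al be); rewrite hf hn -subr_ge0.
    by congr (0 <= _); ring.
  have [h1 h2 h3] := psd2 H.
  rewrite sqrrN in h3.
  exact: (bound_down L0 N0 h1 h2 h3 ha hb).
Qed.
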